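(* Let $g\ne0$ be a real $M_1\times M_2$ matrix with singular value decomposition $g=VSW^T$, let $d$ be the multiplicity of the largest singular value $\|g\|_2$, and let $V^d,W^d$ be as in the context. If $$\|V^d_{i,*}\|=\sqrt{d/M_1}\ \ \forall i\in\{1,\dots,M_1\}\quad\text{and}\quad \|W^d_{j,*}\|=\sqrt{d/M_2}\ \ \forall j\in\{1,\dots,M_2\},$$ then there exist finite-dimensional Hilbert spaces $\mathcal H_1,\mathcal H_2$, a state $\rho$ on $\mathcal H_1\otimes\mathcal H_2$ and observables $\mathcal A_i(x_i)$ (Hermitian, eigenvalues in $[-1,1]$) with $\sum_{x_1,x_2} g_{x_1,x_2}\operatorname{tr}(\rho\,\mathcal A_1(x_1)\otimes\mathcal A_2(x_2))=\sqrt{M_1M_2}\,\|g\|_2$; i.e. the bound of Theorem 1 is tight for $g$.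
   Context: $\|g\|_2$ is the largest singular value of $g$. Singular value decomposition: $V$ orthogonal $M_1\times M_1$, $W$ orthogonal $M_2\times M_2$, $S$ diagonal $M_1\times M_2$ with nonnegative nonincreasing diagonal, $g=VSW^T$. $V^d$ (resp. $W^d$) consists of the first $d$ columns of $V$ (resp. $W$); $A_{i,*}$ denotes the $i$-th row of a matrix $A$ as a column vector. Theorem 1 states $\sum_{x_1,x_2}g_{x_1,x_2}E(x_1,x_2)\le\sqrt{M_1M_2}\|g\|_2$ for all quantum strategies. *)

(* Defs.v *)
(* Complex numbers: an arbitrary numClosedFieldType C
   (e.g. algC, or C itself); real numbers = elements with x \is Num.real. *)
From HB Require Import structures.
From mathcomp Require Import all_boot all_order all_algebra.
Set Implicit Arguments. Unset Strict Implicit. Unset Printing Implicit Defensive.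
Import Order.TTheory GRing.Theory Num.Theory.
Local Open Scope ring_scope.

Section Defs.
Variable C : numClosedFieldType.

(* decoding of a tensor-product index k : 'I_(m*n) into a pair (i, j),
   inverse of mathcomp's mxvec_index *)
Definition unpair_index m n (k : 'I_(m * n)) : 'I_m * 'I_n :=
  enum_val (cast_ord (esym (mxvec_cast m n)) k).

Definition kron m1 n1 m2 n2 (A : 'M[C]_(m1, n1)) (B : 'M[C]_(m2, n2))
  : 'M[C]_(m1 * m2, n1 * n2) :=
  \matrix_(k, l) (A (unpair_index k).1 (unpair_index l).1
                  * B (unpair_index k).2 (unpair_index l).2).

Definition adjmx m n (A : 'M[C]_(m, n)) : 'M[C]_(n, m) := (map_mx Num.conj A)^T.

Definition hermitian n (A : 'M[C]_n) := adjmx A = A.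

Definition psd n (A : 'M[C]_n) :=
  hermitian A /\ forall v : 'cV[C]_n, 0 <= (adjmx v *m A *m v) 0 0.

Definition is_state n (rho : 'M[C]_n) := psd rho /\ \tr rho = 1.

Definition is_observable n (A : 'M[C]_n) :=
  hermitian A /\ forall a : C, eigenvalue A a -> -1 <= a <= 1.

Definition real_mx m n (A : 'M[C]_(m, n)) := forall i j, A i j \is Num.real.

Definition orthogonal_mx n (V : 'M[C]_n) := real_mx V /\ V^T *m V = 1%:M.

Definition diag_rect M1 M2 (sigma : nat -> C) : 'M[C]_(M1, M2) :=
  \matrix_(i, j) (if (i : nat) == j then sigma i else 0).

Definition is_svd M1 M2 (g : 'M[C]_(M1, M2)) (V : 'M[C]_M1) (sigma : nat -> C)
  (W : 'M[C]_M2) :=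
  [/\ orthogonal_mx V, orthogonal_mx W,
      forall k, (k < minn M1 M2)%N -> 0 <= sigma k /\ sigma k \is Num.real,
      forall k l, (k <= l < minn M1 M2)%N -> sigma l <= sigma k
    & g = V *m diag_rect M1 M2 sigma *m W^T].

Definition top_multiplicity M1 M2 (sigma : nat -> C) : nat :=
  count (fun k => sigma k == sigma 0%N) (iota 0 (minn M1 M2)).

Definition row_trunc_norm m (V : 'M[C]_m) (d : nat) (i : 'I_m) : C :=
  sqrtC (\sum_(k < m | (k < d)%N) `|V i k| ^+ 2).

End Defs.

(* Main.v *)
Require Import Defs.
From HB Require Import structures.
From mathcomp Require Import all_boot all_order all_algebra.
From mathcomp Require Import ring lra.
Set Implicit Arguments. Unset Strict Implicit. Unset Printing Implicit Defensive.
Import Order.TTheory GRing.Theory Num.Theory.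
Local Open Scope ring_scope.

Lemma unpair_bij m n : bijective (@unpair_index m n).
Proof.
rewrite /unpair_index; apply: (bij_comp (enum_val_bij _)).
by exists (cast_ord (mxvec_cast m n)) => k; apply: val_inj.
Qed.

Section S.
Variable C : numClosedFieldType.

Lemma sum_unpair m n (F : 'I_m * 'I_n -> C) :
  \sum_k F (unpair_index k) = \sum_p F p.
Proof. by rewrite [RHS](reindex (@unpair_index m n)) //; exact: onW_bij (unpair_bij m n). Qed.

Definition ee n (k : 'I_(n * n)) : C := ((unpair_index k).1 == (unpair_index k).2)%:R.
Definition rho n : 'M[C]_(n * n) := \matrix_(k, l) (ee k * ee l / n%:R).

Definition bil n (X Y : 'M[C]_n) := \sum_a \sum_b X a b * Y a b.

Lemma sum_delta n (a : 'I_n) (F : 'I_n -> C) : \sum_b (a == b)%:R * F b = F a.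
Proof.
rewrite (bigD1 a) //= eqxx mul1r big1 ?addr0 // => b /negbTE.
by rewrite eq_sym => ->; rewrite mul0r.
Qed.

Lemma tr_rho_kron n (X Y : 'M[C]_n) :
  \tr (rho n *m kron X Y) = bil X Y / n%:R.
Proof.
pose u := @unpair_index n n.
have -> : \tr (rho n *m kron X Y) = \sum_k \sum_l
   (((u k).1 == (u k).2)%:R * ((u l).1 == (u l).2)%:R / n%:R) *
   (X (u l).1 (u k).1 * Y (u l).2 (u k).2).
  by apply eq_bigr => k _; rewrite !mxE; apply eq_bigr => l _; rewrite !mxE.
rewrite (sum_unpair (fun p => \sum_l ((p.1 == p.2)%:R * ((u l).1 == (u l).2)%:R / n%:R) *
   (X (u l).1 p.1 * Y (u l).2 p.2))).
under eq_bigr do rewrite (sum_unpair (fun q => ((_ : 'I_n * 'I_n).1 == _.2)%:R * (q.1 == q.2)%:R / n%:R * (X q.1 _.1 * Y q.2 _.2))).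
transitivity (\sum_a \sum_b \sum_c \sum_d ((a == b)%:R * ((c == d)%:R * (X c a * Y d b / n%:R)))).
  rewrite [RHS]pair_bigA /=; apply eq_bigr => p _; rewrite [RHS]pair_bigA /=; apply eq_bigr => q _.
  by rewrite mulrA mulrA mulrAC -!mulrA.
under eq_bigr do under eq_bigr do under eq_bigr do rewrite -mulr_sumr.
under eq_bigr do under eq_bigr do rewrite -mulr_sumr.
under eq_bigr do rewrite sum_delta.
under eq_bigr do under eq_bigr do rewrite sum_delta.
rewrite /bil exchange_big mulr_suml; apply eq_bigr => a _; rewrite mulr_suml.
by apply eq_bigr.
Qed.
Lemma ee_real n (k : 'I_(n*n)) : ee k \is Num.real.
Proof. exact: realn. Qed.

Lemma ee2 n (k : 'I_(n*n)) : ee k * ee k = ee k.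
Proof. by rewrite /ee; case: eqP; rewrite ?mulr0 ?mulr1. Qed.

Lemma rho_state n : (0 < n)%N -> is_state (rho n).
Proof.
move=> n0; split; first split.
- apply/matrixP => k l; rewrite !mxE conj_Creal; first by rewrite (mulrC (ee l)).
  by rewrite rpredM ?rpredV ?rpredM ?realn ?ee_real.
- move=> v.
  have -> : (adjmx v *m rho n *m v) 0 0 =
     (\sum_k ee k * (v k 0)^*) * (\sum_l ee l * v l 0) / n%:R.
    rewrite !mxE; under eq_bigr do rewrite !mxE.
    under eq_bigr do under eq_bigr do rewrite !mxE.
    rewrite mulrAC mulr_sumr; apply eq_bigr => l _.
    rewrite mulr_suml mulr_suml mulr_suml; apply eq_bigr => k _.
    ring.
  set z := \sum_l ee l * v l 0.
  have -> : \sum_k ee k * (v k 0)^* = z^*.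
    rewrite /z rmorph_sum; apply eq_bigr => k _; rewrite rmorphM /= (conj_Creal (ee_real k)) //.
  by rewrite (mulrC z^*) -normCK divr_ge0 ?exprn_ge0 ?ler0n.
- rewrite /mxtrace.
  under eq_bigr do rewrite mxE ee2.
  rewrite -mulr_suml (sum_unpair (fun p => (p.1 == p.2)%:R)) -(pair_bigA _ (fun a b => (a == b)%:R)) /=.
  have E : forall a : 'I_n, \sum_b ((a == b)%:R : C) = 1.
    by move=> a; rewrite -[RHS](sum_delta a (fun _ => 1)); apply eq_bigr => b _; rewrite mulr1.
  under eq_bigr do rewrite E.
  by rewrite sumr_const card_ord -[1 *+ n]/(n%:R) divff // pnatr_eq0 -lt0n.
Qed.

Section Cliff.
Variable D : nat.
Definition TT := {ffun 'I_D -> bool}.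
Definition nn := #|{: TT}|.
Definition flip (k : 'I_D) (x : TT) : TT := [ffun i => if i == k then ~~ x i else x i].
Definition sgn (k : 'I_D) (x : TT) : C := \prod_(i : 'I_D | (i < k)%N) (if x i then -1 else 1).
Definition gen k x y : C := if y == flip k x then sgn k x else 0.
Definition G k : 'M[C]_nn := \matrix_(i, j) gen k (enum_val i) (enum_val j).

Lemma sum_ev (F : TT -> C) : \sum_(i < nn) F (enum_val i) = \sum_t F t.
Proof. by rewrite [RHS](reindex (fun i : 'I_nn => enum_val i)) //; exact: onW_bij (enum_val_bij _). Qed.

Lemma flipK k : involutive (flip k).
Proof. by move=> x; apply/ffunP => i; rewrite !ffunE; case: eqP => //; rewrite negbK. Qed.

Lemma flipC k l x : flip k (flip l x) = flip l (flip k x).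
Proof. by apply/ffunP => i; rewrite !ffunE; case: eqP; case: eqP. Qed.

Lemma sgn_flip_ge (k m : 'I_D) x : (k <= m)%N -> sgn k (flip m x) = sgn k x.
Proof.
move=> km; apply eq_bigr => i ik; rewrite ffunE; case: eqP => // E.
by move: ik; rewrite E ltnNge km.
Qed.

Lemma sgn_flip_lt (k l : 'I_D) x : (k < l)%N -> sgn l (flip k x) = - sgn l x.
Proof.
move=> kl; rewrite /sgn (bigD1 k) //= [in RHS](bigD1 k) //= ffunE eqxx.
rewrite -mulNr; congr (_ * _); first by case: (x k); rewrite ?opprK.
apply eq_bigr => i /andP[_ ik]; rewrite ffunE (negbTE ik) //.
Qed.

Lemma sgn2 k x : sgn k x * sgn k x = 1.
Proof. by rewrite -big_split big1 // => i _; case: (x i); rewrite /= ?mulrNN ?mulr1. Qed.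

Lemma sgn_real k x : sgn k x \is Num.real.
Proof.
rewrite /sgn; apply: (big_ind (fun y : C => y \is Num.real)) => [|a b|i _].
- exact: real1.
- exact: rpredM.
- by case: (x i); rewrite ?realN real1.
Qed.

Lemma sum_if (a : TT) (c : C) (F : TT -> C) :
  \sum_t (if t == a then c else 0) * F t = c * F a.
Proof. by rewrite (bigD1 a) //= eqxx big1 ?addr0 // => t /negbTE ->; rewrite mul0r. Qed.

Lemma G_mul k l i j : (G k *m G l) i j =
  sgn k (enum_val i) * gen l (flip k (enum_val i)) (enum_val j).
Proof.
rewrite mxE (eq_bigr (fun y => gen k (enum_val i) (enum_val y) * gen l (enum_val y) (enum_val j))).
  by rewrite (sum_ev (fun t => gen k (enum_val i) t * gen l t (enum_val j))) sum_if.
by move=> y _; rewrite !mxE.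
Qed.

Lemma G2 k : G k *m G k = 1%:M.
Proof.
apply/matrixP => i j; rewrite G_mul mxE /gen flipK sgn_flip_ge //.
have -> : (enum_val j == enum_val i) = (i == j).
  by rewrite eq_sym; apply/eqP/eqP => [/enum_val_inj|->].
by case: eqP => _; rewrite ?mulr0 ?sgn2.
Qed.

Lemma G_anti_lt (k l : 'I_D) : (k < l)%N -> G k *m G l = - (G l *m G k).
Proof.
move=> kl; apply/matrixP => i j; rewrite G_mul [RHS]mxE G_mul /gen flipC sgn_flip_lt //.
rewrite sgn_flip_ge ?(ltnW kl) //.
by case: eqP => _; rewrite ?mulr0 ?oppr0 // mulrN mulrC.
Qed.

Lemma G_anti (k l : 'I_D) : k != l -> G k *m G l = - (G l *m G k).
Proof.
move=> kl; case: (ltngtP k l) => [lt|lt|E]; first exact: G_anti_lt.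
  by rewrite (G_anti_lt lt) opprK.
by move: kl; rewrite (val_inj E) eqxx.
Qed.

Lemma G_sym k : (G k)^T = G k.
Proof.
apply/matrixP => i j; rewrite !mxE /gen.
set x := enum_val i; set y := enum_val j.
have -> : (x == flip k y) = (y == flip k x).
  by apply/eqP/eqP => ->; rewrite flipK.
by case: eqP => // ->; rewrite sgn_flip_ge.
Qed.

Lemma G_real k i j : G k i j \is Num.real.
Proof. by rewrite mxE /gen; case: eqP => _; rewrite ?sgn_real ?real0. Qed.

Definition Op (f : 'I_D -> C) : 'M[C]_nn := \sum_(k < D) f k *: G k.

Lemma Op_anti f h :
  Op f *m Op h + Op h *m Op f = (2 * \sum_k f k * h k) *: 1%:M.
Proof.
have E : forall f h, Op f *m Op h = \sum_k \sum_l (f k * h l) *: (G k *m G l).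
  move=> f' h'; rewrite /Op mulmx_suml; apply eq_bigr => k _.
  rewrite mulmx_sumr; apply eq_bigr => l _.
  by rewrite -scalemxAl -scalemxAr scalerA.
rewrite !E [X in _ + X]exchange_big -big_split /=.
rewrite mulr_sumr scaler_suml; apply eq_bigr => k _.
rewrite -big_split /=.
under eq_bigr do rewrite (mulrC (h _)) -scalerDr.
rewrite (bigD1 k) //= big1 ?addr0.
  by rewrite G2 -mulr2n -scaler_nat scalerA mulrC.
move=> l lk; rewrite G_anti 1?eq_sym // addNr scaler0 //.
Qed.

Lemma Op_sq f : Op f *m Op f = (\sum_k f k ^+ 2) *: 1%:M.
Proof.
have := Op_anti f f; rewrite -mulr2n -scaler_nat.
move/(congr1 (fun M => 2^-1 *: M)); rewrite !scalerA mulKf ?pnatr_eq0 // mulVf ?pnatr_eq0 // scale1r => ->.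
by congr (_ *: _); apply eq_bigr => k _; rewrite expr2.
Qed.

Lemma Op_tr f h : \tr (Op f *m Op h) = (\sum_k f k * h k) * nn%:R.
Proof.
have := congr1 mxtrace (Op_anti f h).
rewrite mxtraceD (mxtrace_mulC (Op h)) mxtraceZ mxtrace1 -mulr2n -mulr_natl -mulrA.
rewrite mulr1 -mulr_natl => E; apply: (@mulfI _ 2%:R); [by rewrite pnatr_eq0 | by rewrite mulr_natl E mulr1].
Qed.

Lemma Op_sym f : (Op f)^T = Op f.
Proof.
apply/matrixP => i j; rewrite mxE !summxE; apply eq_bigr => k _.
rewrite !mxE; have := congr1 (fun M : 'M[C]_nn => M i j) (G_sym k); rewrite !mxE => ->.
done.
Qed.

Lemma Op_real f : (forall k, f k \is Num.real) -> forall i j, Op f i j \is Num.real.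
Proof.
move=> fr i j; rewrite summxE rpred_sum // => k _.
by rewrite mxE rpredM ?G_real.
Qed.

Lemma Op_obs f : (forall k, f k \is Num.real) -> \sum_k f k ^+ 2 = 1 ->
  is_observable (Op f).
Proof.
move=> fr f1; split.
  apply/matrixP => i j; rewrite !mxE conj_Creal ?Op_real //.
  by have := congr1 (fun M : 'M[C]_nn => M i j) (Op_sym f); rewrite mxE.
move=> a /eigenvalueP [v vA v0].
have : v *m (Op f *m Op f) = (a ^+ 2) *: v.
  by rewrite mulmxA vA -scalemxAl vA scalerA expr2.
rewrite Op_sq f1 scale1r mulmx1 => /eqP; rewrite -subr_eq0 -{1}[v]scale1r -scalerBl.
rewrite scaler_eq0 (negbTE v0) orbF subr_eq0 eq_sym sqrf_eq1 => /orP[] /eqP ->;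
  have h : (-1 : C) <= 1 := le_trans (lerN10 _) ler01; by rewrite lexx h.
Qed.

End Cliff.

Lemma bil_tr n (X Y : 'M[C]_n) : bil X Y = \tr (X *m Y^T).
Proof. by rewrite /bil /mxtrace; apply eq_bigr => a _; rewrite mxE; apply eq_bigr => b _; rewrite mxE. Qed.

Lemma Op_lin D (I : finType) (c : I -> C) (f : I -> 'I_D -> C) :
  \sum_j c j *: Op (f j) = Op (fun k => \sum_j c j * f j k).
Proof.
rewrite /Op; under eq_bigr do rewrite scaler_sumr.
rewrite exchange_big; apply eq_bigr => k _; rewrite scaler_suml; apply eq_bigr => j _.
by rewrite scalerA.
Qed.

End S.

Lemma init_seg m (P : pred nat) :
  (forall k l, (l <= k)%N -> (k < m)%N -> P k -> P l) ->
  forall k, (k < count P (iota 0 m))%N -> P k.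
Proof.
elim: m => [|m IH] H k; first by [].
rewrite -[m.+1]addn1.
rewrite iotaD add0n count_cat /= addn0.
have H' : forall k l, (l <= k)%N -> (k < m)%N -> P k -> P l.
  by move=> a b ba am; apply: H ba (ltnW _); rewrite ltnS.
case Pm: (P m) => /=; last by rewrite addn0; apply: IH.
move=> kl; apply: (H m) => //.
have := count_size P (iota 0 m); rewrite size_iota => cm.
by rewrite -ltnS (leq_trans kl) // addn1 ltnS.
Qed.

Theorem corollary1 (C : numClosedFieldType) (M1 M2 : nat)
  (g : 'M[C]_(M1, M2)) (V : 'M[C]_M1) (sigma : nat -> C) (W : 'M[C]_M2) :
  real_mx g -> g != 0 ->
  is_svd g V sigma W ->
  let d := top_multiplicity M1 M2 sigma in
  (forall i : 'I_M1, row_trunc_norm V d i = sqrtC (d%:R / M1%:R)) ->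
  (forall j : 'I_M2, row_trunc_norm W d j = sqrtC (d%:R / M2%:R)) ->
  exists (n1 n2 : nat) (rho : 'M[C]_(n1 * n2))
         (A1 : 'I_M1 -> 'M[C]_n1) (A2 : 'I_M2 -> 'M[C]_n2),
    [/\ is_state rho,
        forall x1, is_observable (A1 x1),
        forall x2, is_observable (A2 x2)
      & \sum_(x1 < M1) \sum_(x2 < M2)
          g x1 x2 * \tr (rho *m kron (A1 x1) (A2 x2))
        = sqrtC ((M1 * M2)%:R) * sigma 0%N].
Proof.
move=> _ g0 [[Vr _] [Wr WW] sig_pos sig_dec gdef] d hV hW.
have M1p : (0 < M1)%N.
  rewrite lt0n; apply/eqP => E; case/negP: g0; apply/eqP/matrixP => i j.
  by have := ltn_ord i; rewrite {2}E.
have M2p : (0 < M2)%N.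
  rewrite lt0n; apply/eqP => E; case/negP: g0; apply/eqP/matrixP => i j.
  by have := ltn_ord j; rewrite {2}E.
have dm : (d <= minn M1 M2)%N by rewrite /d /top_multiplicity -[X in (_ <= X)%N](size_iota 0) count_size.
have dle1 : (d <= M1)%N by apply: leq_trans dm (geq_minl _ _).
have dle2 : (d <= M2)%N by apply: leq_trans dm (geq_minr _ _).
have dpos : (0 < d)%N.
  rewrite /d /top_multiplicity -has_count; apply/hasP; exists 0%N => //.
  by rewrite mem_iota add0n leq0n /= leq_min M1p M2p.
have dsig : forall k, (k < d)%N -> sigma k = sigma 0%N.
  move=> k kd; apply/eqP; move: k kd; apply: init_seg => k l lk km /eqP Ek.
  have l0 : sigma l <= sigma 0%N by apply: sig_dec; rewrite leq0n (leq_ltn_trans lk km).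
  have lk' : sigma k <= sigma l by apply: sig_dec; rewrite lk km.
  by rewrite eq_le l0 -Ek lk'.
have nrm : forall (M : nat) (X : 'M[C]_M) (le : (d <= M)%N), real_mx X ->
    (forall i, row_trunc_norm X d i = sqrtC (d%:R / M%:R)) ->
    forall i, \sum_(k < d) X i (widen_ord le k) ^+ 2 = d%:R / M%:R.
  move=> M X le Xr hX i; have := hX i; rewrite /row_trunc_norm.
  move/(congr1 (fun x => x ^+ 2)); rewrite !sqrtCK => <-.
  have E := @big_ord_narrow_cond C 0 +%R d M xpredT (fun k => `|X i k| ^+ 2) le.
  simpl in E; rewrite E; apply eq_bigr => k _; by rewrite real_normK.
have M1n : (M1%:R : C) != 0 by rewrite pnatr_eq0 -lt0n.
have M2n : (M2%:R : C) != 0 by rewrite pnatr_eq0 -lt0n.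
have dn : (d%:R : C) != 0 by rewrite pnatr_eq0 -lt0n.
pose c1 := sqrtC (M1%:R / d%:R : C).
pose c2 := sqrtC (M2%:R / d%:R : C).
have c1r : c1 \is Num.real by apply: ger0_real; rewrite sqrtC_ge0 divr_ge0 ?ler0n.
have c2r : c2 \is Num.real by apply: ger0_real; rewrite sqrtC_ge0 divr_ge0 ?ler0n.
pose fa := fun (i : 'I_M1) (k : 'I_d) => c1 * V i (widen_ord dle1 k).
pose fb := fun (j : 'I_M2) (k : 'I_d) => c2 * W j (widen_ord dle2 k).
have np : (0 < nn d)%N by apply/card_gt0P; exists [ffun=> false].
exists (nn d), (nn d), (rho C (nn d)), (fun i => Op (fa i)), (fun j => Op (fb j)).
split.
- exact: rho_state.
- move=> i; apply: Op_obs; first by move=> k; rewrite rpredM ?Vr.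
  under eq_bigr do rewrite exprMn.
  by rewrite -mulr_sumr sqrtCK (nrm _ _ _ Vr hV); field; apply/andP.
- move=> j; apply: Op_obs; first by move=> k; rewrite rpredM ?Wr.
  under eq_bigr do rewrite exprMn.
  by rewrite -mulr_sumr sqrtCK (nrm _ _ _ Wr hW); field; apply/andP.
have nnn : ((nn d)%:R : C) != 0 by rewrite pnatr_eq0 -lt0n.
have gW : g *m W = V *m diag_rect M1 M2 sigma by rewrite gdef -mulmxA WW mulmx1.
have VS : forall i (k : 'I_d), (V *m diag_rect M1 M2 sigma) i (widen_ord dle2 k)
    = V i (widen_ord dle1 k) * sigma 0%N.
  move=> i k; rewrite mxE (bigD1 (widen_ord dle1 k)) //= big1 ?addr0.
    by rewrite mxE /= eqxx dsig.
  move=> l lk; rewrite mxE /=.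
  have -> : ((l : nat) == k) = false.
    by apply/negbTE; apply: contra lk => /eqP E; apply/eqP/val_inj.
  by rewrite mulr0.
transitivity (\sum_i \sum_k fa i k * (c2 * sigma 0%N * V i (widen_ord dle1 k))).
  apply eq_bigr => i _.
  under eq_bigr do rewrite tr_rho_kron bil_tr Op_sym mulrA.
  rewrite -mulr_suml.
  rewrite (eq_bigr (fun j => \tr (Op (fa i) *m (g i j *: Op (fb j))))); last first.
    by move=> j _; rewrite -scalemxAr mxtraceZ.
  rewrite -raddf_sum /= -mulmx_sumr Op_lin Op_tr mulfK //.
  apply eq_bigr => k _; congr (_ * _).
  transitivity (c2 * (g *m W) i (widen_ord dle2 k)).
    by rewrite [in RHS]mxE mulr_sumr; apply eq_bigr => j _; rewrite /fb mulrCA.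
  by rewrite gW VS (mulrC (V _ _)) mulrA.
transitivity (\sum_(i < M1) c1 * c2 * sigma 0%N * (d%:R / M1%:R)).
  apply eq_bigr => i _; rewrite -(nrm _ _ _ Vr hV i) mulr_sumr; apply eq_bigr => k _.
  by rewrite /fa; ring.
have key : c1 * c2 * d%:R = sqrtC ((M1 * M2)%:R).
  have -> : (d%:R : C) = sqrtC (d%:R ^+ 2) by rewrite sqrCK ?ler0n.
  rewrite -!sqrtCM ?nnegrE ?divr_ge0 ?mulr_ge0 ?exprn_ge0 ?invr_ge0 ?ler0n //.
  by congr sqrtC; rewrite natrM; field.
rewrite big_const_ord iter_addr_0 -key -mulr_natr.
by field.
Qed.
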